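(* Let $\theta>0$, $q>0$, let $r$ be a positive integer, and let $\mathcal{U}$ be a distribution on $[0,1]$ that is $(\theta,q)$-polynomially bounded below at 1. Let $\phi:[m]\to[n]$ be any fixed allocation of $m$ items to $n$ agents, let $z_i=|\phi^{-1}(i)|$, and let the utilities $u_i(j)$ ($i\in[n]$, $j\in[m]$) be drawn independently from $\mathcal{U}$. Let $\rho:=\left(1-\left(\theta\left(\frac{1}{r+1}\right)^q\right)^{r+1}\right)^{1/4}$. Then for every pair of agents $i,i'$ with $z_i\leq r<z_{i'}$, $$\Pr\left[\sum_{j\in\phi^{-1}(i')}u_i(j)\leq z_i\right]\leq\rho^{z_{i'}/r}.$$
   Context: A distribution $\mathcal{U}$ on $[0,1]$ is $(\theta,q)$-polynomially bounded below at 1 if for every $\alpha\in(0,1]$, $\Pr_{u\sim\mathcal{U}}[u>1-\alpha]\geq\theta\alpha^q$ (this forces $\theta\leq 1$). An allocation $\phi:[m]\to[n]$ assigns item $j$ to agent $\phi(j)$. *)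

(* Defs.v *)
From HB Require Import structures.
From mathcomp Require Import all_boot all_order all_algebra.
From mathcomp Require Import all_classical all_reals all_analysis.
Set Implicit Arguments. Unset Strict Implicit. Unset Printing Implicit Defensive.
Import Order.TTheory GRing.Theory Num.Theory.
Local Open Scope classical_set_scope.
Local Open Scope ring_scope.

Definition poly_bounded_below_at1 (R : realType) (U : probability R R) (theta q : R) :=
  forall alpha : R, 0 < alpha <= 1 ->
    ((theta * alpha `^ q)%:E <= U [set x : R | (1 - alpha < x)%R])%E.

Definition supported_on_01 (R : realType) (U : probability R R) :=
  U [set x : R | (0 <= x <= 1)%R] = 1%E.

Definition mutually_independent (R : realType) d (T : measurableType d)
  (P : probability T R) (I : finType) (X : I -> {RV P >-> R}) :=
  forall (S : {set I}) (B : I -> set R), (forall k, measurable (B k)) ->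
    P [set w | forall k, k \in S -> B k (X k w)] =
    (\prod_(k in S) P (X k @^-1` B k))%E.

Definition rho_const (R : realType) (theta q : R) (r : nat) : R :=
  (1 - (theta * (1 / (r.+1)%:R) `^ q) ^+ r.+1) `^ (1 / 4).

(* Main.v *)
Require Import Defs.
From HB Require Import structures.
From mathcomp Require Import all_boot all_order all_algebra.
From mathcomp Require Import all_classical all_reals all_analysis.
From mathcomp Require Import ring lra zify.
Import Order.TTheory GRing.Theory Num.Theory.
Local Open Scope classical_set_scope.
Local Open Scope ring_scope.

Lemma ev_meas (R : realType) d (T : measurableType d) (P : probability T R) (m : nat)
  (X : 'I_m -> {RV P >-> R}) (D : {set 'I_m}) (B : 'I_m -> set R) :
  (forall j, measurable (B j)) ->
  measurable [set w | forall j, j \in D -> B j (X j w)].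
Proof.
move=> mB.
have -> : [set w | forall j, j \in D -> B j (X j w)] =
   \bigcap_(j in [set j | j \in D]) (X j @^-1` B j).
  by apply/seteqP; split => w /= H j; apply: H.
apply: fin_bigcap_measurable; first exact: finite_finset.
by move=> j _; apply: measurable_funPTI.
Qed.

Lemma finE (R : realType) d (T : measurableType d) (P : probability T R) (A : set T) :
  measurable A -> P A = (fine (P A))%:E.
Proof. by move=> mA; rewrite fineK // fin_num_measure. Qed.
Arguments finE {R d T} P {A}.

Lemma core (R : realType) d (T : measurableType d) (P : probability T R) (m : nat)
  (X : 'I_m -> {RV P >-> R})
  (indep : forall (D : {set 'I_m}) (B : 'I_m -> set R), (forall j, measurable (B j)) ->
    P [set w | forall j, j \in D -> B j (X j w)] = (\prod_(j in D) P (X j @^-1` B j))%E)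
  (H : set R) (mH : measurable H) (Bl : nat -> {set 'I_m})
  (disj : forall t t', t != t' -> ([disjoint Bl t & Bl t'])%B) (K : nat) :
  P [set w | forall t, (t < K)%N -> ~ (forall j, j \in Bl t -> H (X j w))] =
  (\prod_(t < K) (1 - \prod_(j in Bl t) fine (P (X j @^-1` H))))%:E.
Proof.
pose ev := fun (D : {set 'I_m}) (B : 'I_m -> set R) => [set w | forall j, j \in D -> B j (X j w)].
pose A := fun t => ev (Bl t) (fun _ => H).
pose E := fun t => [set w | forall t', (t' < t)%N -> ~ A t' w].
have mA : forall t, measurable (A t) by move=> t; apply: ev_meas.
have ES : forall t, E t.+1 = E t `&` ~` A t.
  move=> t; apply/seteqP; split => w /=.
    move=> h; split; [move=> t' lt; apply: h; exact: ltnW|apply: h; exact: ltnSn].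
  move=> [h1 h2] t'; rewrite ltnS leq_eqVlt => /orP[/eqP->//|]; exact: h1.
have E0 : E 0 = setT by apply/seteqP; split => w //=.
have mE : forall t, measurable (E t).
  elim=> [|t IH]; first by rewrite E0.
  by rewrite ES; apply: measurableI => //; apply: measurableC.
have prev : forall D B, (forall j, measurable (B j)) ->
    fine (P (ev D B)) = \prod_(j in D) fine (P (X j @^-1` B j)).
  move=> D B mB; rewrite /ev indep //.
  have -> : (\prod_(j in D) P (X j @^-1` B j))%E =
     (\prod_(j in D) fine (P (X j @^-1` B j)))%:E.
    by rewrite -prodEFin; apply: eq_bigr => j _; rewrite -finE //; apply: measurable_funPTI.
  by [].
have key : forall t (D : {set 'I_m}) (B : 'I_m -> set R), (forall j, measurable (B j)) ->
   (forall t', (t' < t)%N -> ([disjoint D & Bl t'])%B) ->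
   P (E t `&` ev D B) = (fine (P (ev D B)) *
       \prod_(t' < t) (1 - \prod_(j in Bl t') fine (P (X j @^-1` H))))%:E.
  elim=> [|t IH] D B mB dD.
    by rewrite E0 setTI big_ord0 mulr1 -finE //; apply: ev_meas.
  pose B' := fun j => if j \in D then B j else H.
  have mB' : forall j, measurable (B' j) by move=> j; rewrite /B'; case: ifP.
  have dt : ([disjoint D & Bl t])%B by apply: dD.
  have evU : ev D B `&` A t = ev (D :|: Bl t) B'.
    rewrite /A /ev; apply/seteqP; split => w /=.
      move=> [h1 h2] j; rewrite finset.in_setU /B'; case: ifP => jD /=.
        by move=> _; apply: h1.
      by apply: h2.
    move=> h; split => j jD.
      by have := h j; rewrite finset.in_setU jD /B' jD; apply.
    have := h j; rewrite finset.in_setU jD orbT /B' (disjointFl dt jD); apply => //.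
  have splitE : E t `&` ev D B = (E t.+1 `&` ev D B) `|` (E t `&` ev (D :|: Bl t) B').
    rewrite -evU ES; apply/seteqP; split => w /=.
      move=> [h1 h2]; have [hA|hA] := pselect (A t w); [right|left] => //.
    by move=> [[[h1 h2] h3]|[h1 [h2 h3]]].
  have disjE : (E t.+1 `&` ev D B) `&` (E t `&` ev (D :|: Bl t) B') = set0.
    rewrite -evU ES; apply/seteqP; split => w //=.
    by move=> [[[_ h2] _] [_ [_ h3]]].
  have mev : forall D B, (forall j, measurable (B j)) -> measurable (ev D B).
    by move=> *; apply: ev_meas.
  have := measureU P (measurableI _ _ (mE t.+1) (mev D B mB))
     (measurableI _ _ (mE t) (mev _ _ mB')) disjE.
  have IH1 := IH D B mB (fun t' lt => dD t' (ltnW lt)).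
  rewrite -splitE => Hs0.
  have Hs : P (E t `&` ev D B) = (P (E t.+1 `&` ev D B) + P (E t `&` ev (D :|: Bl t) B'))%E := Hs0.
  move: Hs; rewrite IH1.
  rewrite (IH (D :|: Bl t) B') //; last first.
    move=> t' lt; rewrite -finset.setI_eq0 finset.setIUl finset.setU_eq0 !finset.setI_eq0 dD ?disj //=.
      by rewrite neq_ltn ltnNge ltnW.
    exact: ltnW.
  rewrite (finE P (measurableI _ _ (mE t.+1) (mev D B mB))) -EFinD => Hs2; have Heq := EFin_inj Hs2.
  congr (_%:E).
  have Hp : fine (P (ev (D :|: Bl t) B')) =
     fine (P (ev D B)) * \prod_(j in Bl t) fine (P (X j @^-1` H)).
    rewrite !prev //.
    rewrite (eq_bigl [predU D & Bl t]); last by move=> j; rewrite !inE.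
    rewrite bigU //; congr (_ * _); apply: eq_bigr => j jD; rewrite /B'.
      by rewrite jD.
    by rewrite (disjointFl dt jD).
  rewrite Hp big_ord_recr /= in Heq *.
  set a := fine (P (ev D B)) in Heq *.
  set b := \prod_(j in Bl t) _ in Heq Hp *.
  set c := \prod_(i < t) _ in Heq *.
  set x := fine _ in Heq *.
  have -> : x = a * c - a * b * c by rewrite Heq; ring.
  ring.
have := key K (finset.set0 : {set 'I_m}) (fun _ => setT) (fun _ => measurableT).
have d0 : forall t', (t' < K)%N -> ([disjoint (finset.set0 : {set 'I_m}) & Bl t'])%B.
  by move=> t' _; rewrite -finset.setI_eq0 finset.set0I.
move=> /(_ d0).
have -> : ev (finset.set0 : {set 'I_m}) (fun _ => setT) = setT by apply/seteqP; split.
by rewrite setIT probability_setT /= mul1r.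
Qed.

Lemma natfact (z K r rem : nat) : (0 < r)%N -> (0 < K)%N -> z = (K * r.+1 + rem)%N -> (rem < r.+1)%N -> (z <= K * (4 * r))%N.
Proof. move=> *; nia. Qed.

Theorem lemma5 (R : realType) (d : measure_display) (T : measurableType d)
  (P : probability T R) (U : probability R R) (theta q : R) (r n m : nat)
  (phi : 'I_m -> 'I_n) (u : 'I_n -> 'I_m -> {RV P >-> R}) (i i' : 'I_n) :
  0 < theta -> 0 < q -> (0 < r)%N ->
  supported_on_01 U -> poly_bounded_below_at1 U theta q ->
  mutually_independent (fun p : 'I_n * 'I_m => u p.1 p.2) ->
  (forall k j (A : set R), measurable A -> distribution P (u k j) A = U A) ->
  let z := fun k : 'I_n => #|[pred j : 'I_m | phi j == k]| in
  (z i <= r < z i')%N ->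
  (P [set w | (\sum_(j | phi j == i') u i j w <= (z i)%:R)%R]
     <= ((rho_const theta q r) `^ ((z i')%:R / r%:R))%:E)%E.
Proof.
move=> th0 q0 r0 supp pbb mi hdist z /andP[zir rzi'].
set zi := z i in zir *; set z' := z i' in rzi' *.
pose X := u i.
pose J : {set 'I_m} := [set j | phi j == i']%SET.
have cJ : #|J| = z' by rewrite cardsE.
have indep : forall (D : {set 'I_m}) (B : 'I_m -> set R), (forall j, measurable (B j)) ->
    P [set w | forall j, j \in D -> B j (X j w)] = (\prod_(j in D) P (X j @^-1` B j))%E.
  move=> D B mB.
  have := mi [set (i, j) | j in D]%SET (fun p => B p.2) (fun p => mB p.2).
  rewrite big_imset /=; last by move=> a b _ _ [].
  move=> <-; congr (P _); apply/seteqP; split => w /= h.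
    by move=> k /imsetP[j jD ->]; apply: h.
  by move=> j jD; apply: (h (i, j)); apply: imset_f.
have hd : forall j A, measurable A -> P (X j @^-1` A) = U A.
  by move=> j A mA; rewrite -(hdist i j A mA).
pose s := r.+1.
pose al : R := 1 / s%:R.
have al0 : 0 < al by rewrite /al divr_gt0 // ltr0n.
have al1 : al <= 1 by rewrite /al ler_pdivrMr ?ltr0n // mul1r ler1n.
pose H : set R := [set x | 1 - al < x].
have mH : measurable H.
  rewrite (_ : H = `]1 - al, +oo[%classic); first exact: measurable_itv.
  by apply/seteqP; split => x /=; rewrite in_itv /= andbT.
pose p : R := theta * al `^ q.
have p0 : 0 < p by rewrite /p mulr_gt0 // powR_gt0.
have pH : forall j, p <= fine (P (X j @^-1` H)) <= 1.
  move=> j; rewrite hd //.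
  have := pbb al (andb_true_intro (conj al0 al1)); rewrite -/H => hp.
  have hU := probability_le1 U mH.
  rewrite (finE U mH) lee_fin in hp hU.
  by apply/andP; split.
have Jne : (0 < #|J|)%N by rewrite cJ; apply: leq_ltn_trans rzi'.
have [j0 _] := card_gt0P Jne.
pose K := (z' %/ s)%N.
have Ks : (K * s <= z')%N by apply: leq_trunc_div.
have K1 : (1 <= K)%N by rewrite /K divn_gt0.
pose e := enum J.
have se : size e = z' by rewrite -cJ cardE.
have ue : uniq e by apply: enum_uniq.
pose Bl t := if (t < K)%N then [set nth j0 e (t * s + x) | x : 'I_s]%SET else finset.set0.
have hbnd : forall t (x : 'I_s), (t < K)%N -> (t * s + x < z')%N.
  move=> t x tK; have xs := ltn_ord x.
  apply: (@leq_trans (K * s)) => //.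
  apply: (@leq_trans (t * s + s)); first by rewrite ltn_add2l.
  by rewrite addnC -mulSn leq_mul2r tK orbT.
have BlJ : forall t j, j \in Bl t -> j \in J.
  move=> t j; rewrite /Bl; case: ifP => tK; last by rewrite inE.
  move=> /imsetP[x _ ->]; rewrite -mem_enum; apply: mem_nth; rewrite se; exact: hbnd.
have cBl : forall t, (t < K)%N -> #|Bl t| = s.
  move=> t tK; rewrite /Bl tK card_imset ?card_ord // => x y /eqP.
  rewrite nth_uniq ?se ?hbnd // eqn_add2l => /eqP h; exact: val_inj.
have disj : forall t t', t != t' -> ([disjoint Bl t & Bl t'])%B.
  move=> t t' ntt; rewrite -finset.setI_eq0 /Bl.
  case: ifP => tK; last by rewrite finset.set0I.
  case: ifP => t'K; last by rewrite finset.setI0.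
  apply/eqP/setP => j; rewrite !inE; apply/negP => /andP[/imsetP[x _ ->] /imsetP[y _ /eqP]].
  rewrite nth_uniq ?se ?hbnd // => /eqP h.
  have := congr1 (divn^~ s) h; rewrite /= !divnMDl // !divn_small // !addn0 => /eqP.
  by rewrite (negbTE ntt).
pose N0 : set R := [set x | 0 <= x].
have mN0 : measurable N0.
  rewrite (_ : N0 = `[0, +oo[%classic); first exact: measurable_itv.
  by apply/seteqP; split => x /=; rewrite in_itv /= andbT.
pose G := [set w | forall j, j \in J -> N0 (X j w)].
have mG : measurable G by exact: (@ev_meas _ _ _ P _ X J (fun _ => N0) (fun _ => mN0)).
have U01 : U N0 = 1%E.
  apply/eqP; rewrite eq_le probability_le1 //=.
  have m01 : measurable [set x : R | 0 <= x <= 1].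
    rewrite (_ : [set x | 0 <= x <= 1] = `[0, 1]%classic); first exact: measurable_itv.
    by apply/seteqP; split => x /=; rewrite in_itv.
  have sub : [set x : R | 0 <= x <= 1] `<=` N0 by move=> x /= /andP[].
  have h : (U [set x : R | (0 <= x <= 1)%R] <= U N0)%E := le_measure U (mem_set m01) (mem_set mN0) sub.
  by rewrite supp in h.
have PG : P G = 1%E.
  rewrite /G (indep J (fun _ => N0)) // big1 // => j _; rewrite hd //.
have PnG : P (~` G) = 0%E by rewrite probability_setC // PG subee.
pose E := [set w | forall t, (t < K)%N -> ~ (forall j, j \in Bl t -> H (X j w))].
have mE : measurable E.
  rewrite (_ : E = \bigcap_(t in `I_K) ~` [set w | forall j, j \in Bl t -> H (X j w)]).
    apply: fin_bigcap_measurable; first exact: finite_II.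
    move=> t _; apply: measurableC.
    exact: (@ev_meas _ _ _ P _ X (Bl t) (fun _ => H) (fun _ => mH)).
  by apply/seteqP; split => w /= h t; apply: h.
pose S := [set w | (\sum_(j | phi j == i') u i j w <= zi%:R)%R].
have mS : measurable S.
  have mf : measurable_fun setT (fun w => \sum_(j | phi j == i') X j w).
    rewrite (_ : (fun w => _) = fun w => \sum_(j <- index_enum _) (if phi j == i' then X j w else 0)).
      apply: measurable_sum => j; case: (phi j == i'); [exact: measurable_funP | exact: measurable_cst].
    by apply: funext => w; rewrite big_mkcond.
  rewrite (_ : S = setT `&` (fun w => \sum_(j | phi j == i') X j w) @^-1` `]-oo, zi%:R]%classic).
    by apply: mf => //; apply: measurable_itv.
  by rewrite setTI; apply/seteqP; split => w /=; rewrite in_itv.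
have sR : s%:R = r%:R + 1 :> R by rewrite /s -natr1.
have sal : s%:R * (1 - al) = r%:R.
  rewrite /al sR; field; rewrite -sR pnatr_eq0 //.
have SEG : S `<=` E `|` ~` G.
  move=> w /= hS; have [g|ng] := pselect (G w); [left|by right].
  move=> t tK hall.
  have : (r%:R < \sum_(j | phi j == i') X j w)%R.
    rewrite -sal (eq_bigl (fun j => j \in J)); last by move=> j; rewrite inE.
    rewrite (bigID (fun j => j \in Bl t)) /=.
    rewrite -[ltLHS]addr0; apply: ltr_leD; last first.
      by apply: sumr_ge0 => j /andP[jJ _]; apply: g.
    rewrite (eq_bigl (fun j => j \in Bl t)); last first.
      by move=> j; apply/andP/idP => [[]//|jB]; split => //; apply: BlJ jB.
    apply: (@le_lt_trans _ _ (\sum_(j in Bl t) (1 - al))).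
      by rewrite sumr_const cBl // mulr_natl.
    apply: ltr_sum.
      have : (0 < #|Bl t|)%N by rewrite cBl.
      by move=> /card_gt0P[j jB]; apply/hasP; exists j => //; rewrite mem_index_enum.
    by move=> j jB; apply: hall.
  move: hS; rewrite /X => hS h.
  have zr : (zi%:R <= r%:R :> R) by rewrite ler_nat.
  by have := lt_le_trans h (le_trans hS zr); rewrite ltxx.
have PS : (P S <= P E)%E.
  have h1 : (P S <= P (E `|` ~` G))%E :=
    le_measure P (mem_set mS) (mem_set (measurableU _ _ mE (measurableC mG))) SEG.
  have h2 : (P (E `|` ~` G) <= P E + P (~` G))%E := measureU2 P mE (measurableC mG).
  by rewrite PnG adde0 in h2; apply: le_trans h2.
have PE := core _ _ _ P _ X indep _ mH _ disj K.
pose b := 1 - p ^+ s.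
have p1 : p <= 1 by have /andP[h1 h2] := pH j0; apply: le_trans h2.
have ps0 : 0 < p ^+ s by rewrite exprn_gt0.
have b1 : b <= 1 by rewrite /b lerBlDr lerDl ltW.
have bound : \prod_(t < K) (1 - \prod_(j in Bl t) fine (P (X j @^-1` H))) <= b ^+ K.
  have pc : forall k, \prod_(t < k) b = b ^+ k.
    by elim => [|k IH]; rewrite ?big_ord0 ?expr0 // big_ord_recr IH exprSr.
  rewrite -pc.
  apply: ler_prod => t _; apply/andP; split.
    rewrite subr_ge0; apply: prodr_ile1 => j _.
    by have /andP[h1 h2] := pH j; rewrite h2 andbT (le_trans (ltW p0) h1).
  have hp : p ^+ s <= \prod_(j in Bl t) fine (P (X j @^-1` H)).
    rewrite -(cBl t (ltn_ord t)) -prodr_const.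
    apply: ler_prod => j _; have /andP[h1 h2] := pH j; by rewrite h1 (ltW p0).
  by rewrite /b lerD2l lerN2.
have b0 : 0 <= b by rewrite /b subr_ge0 exprn_ile1 // (ltW p0).
apply: le_trans PS _.
have PE' : P E = (\prod_(t < K) (1 - \prod_(j in Bl t) fine (P (X j @^-1` H))))%:E := PE.
rewrite PE' lee_fin; apply: le_trans bound _.
have -> : rho_const theta q r = b `^ (1/4) by rewrite /rho_const.
have [b00|bpos] := eqVneq b 0.
  by rewrite b00 expr0n gtn_eqF // powR_ge0.
have bp : 0 < b by rewrite lt0r bpos b0.
rewrite -powR_mulrn // -powRrM; apply: ger_powR; first by rewrite bp b1.
have hz : (z' <= K * (4 * r))%N.
  apply: (natfact _ _ _ (z' %% s)) => //; first exact: divn_eq.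
  exact: ltn_pmod.
have -> : (1 / 4 * (z'%:R / r%:R) : R) = z'%:R / (4 * r%:R).
  field; rewrite pnatr_eq0 -lt0n //.
rewrite ler_pdivrMr ?mulr_gt0 ?ltr0n // -!natrM ler_nat.
exact: hz.
Qed.
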